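(* For every positive integer $n$, there exists a connected graph $G$ such that $\det(G) = 2n$ and $\det'(G) = n$.
   Context: A vertex subset $S$ of $G$ is a vertex determining set if the only automorphism of $G$ fixing every vertex of $S$ is the identity; the determining number $\det(G)$ is the minimum size of a vertex determining set. For a graph $G$ with at most one isolated vertex and no component isomorphic to $K_2$, an edge subset $T$ is an edge determining set if the only automorphism $\phi$ of $G$ satisfying $\{\phi(u),\phi(v)\}=\{u,v\}$ for all $\{u,v\}\in T$ is the identity; the determining index $\det'(G)$ is the minimum size of an edge determining set. *)

(* Defs.v *)
From mathcomp Require Import all_boot all_fingroup.
Set Implicit Arguments. Unset Strict Implicit. Unset Printing Implicit Defensive.

Section Graphs.
Variable T : finType.
Variable e : rel T.

Definition simple_graph : Prop := symmetric e /\ irreflexive e.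

Definition connected_graph : Prop := forall x y : T, connect e x y.

Definition is_automorphism (p : {perm T}) : Prop :=
  forall x y : T, e (p x) (p y) = e x y.

Definition vertex_determining (S : {set T}) : Prop :=
  forall p : {perm T}, is_automorphism p ->
    (forall x, x \in S -> p x = x) -> p = 1%g.

Definition is_determining_number (k : nat) : Prop :=
  (exists S : {set T}, vertex_determining S /\ #|S| = k) /\
  (forall S : {set T}, vertex_determining S -> k <= #|S|).

Definition edge_set : {set {set T}} :=
  [set [set x.1; x.2] | x in [set x : T * T | e x.1 x.2]].

Definition edge_determining (F : {set {set T}}) : Prop :=
  F \subset edge_set /\
  forall p : {perm T}, is_automorphism p ->
    (forall E, E \in F -> p @: E = E) -> p = 1%g.

Definition is_determining_index (k : nat) : Prop :=
  (exists F : {set {set T}}, edge_determining F /\ #|F| = k) /\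
  (forall F : {set {set T}}, edge_determining F -> k <= #|F|).

End Graphs.

(* Main.v *)
Require Import Defs.
From mathcomp Require Import all_boot all_fingroup.
Set Implicit Arguments. Unset Strict Implicit. Unset Printing Implicit Defensive.

Section G.
Variable n : nat.
Definition VT := option ('I_n * (bool * bool))%type.
Definition ge (x y : VT) : bool :=
  match x, y with
  | Some (i, s), Some (j, t) => [&& i == j, s != t & s.1 || t.1]
  | None, Some (_, t) => ~~ t.1
  | Some (_, s), None => ~~ s.1
  | None, None => false
  end.

Lemma ge_sym : symmetric ge.
Proof.
move=> x y; case: x => [[i [[] []]]|]; case: y => [[j [[] []]]|] //=; rewrite ?(eq_sym i j) //.
Qed.

Lemma ge_irr : irreflexive ge.
Proof. move=> x; case: x => [[i s]|] //=. by rewrite !eqxx. Qed.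

Lemma ge_conn : connected_graph ge.
Proof.
have H : forall x, connect ge x None.
  case=> [[i [[] b]]|] //.
  - apply: (connect_trans (y := Some (i, (false, false)))).
      by apply: connect1; rewrite /= eqxx.
    by apply: connect1.
  - by apply: connect1.
move=> x y; apply: connect_trans (H x) _.
by rewrite (sym_connect_sym (@ge_sym)); exact: H.
Qed.

End G.

Lemma tperm_aut (T : finType) (e : rel T) a b :
  (forall y, y != a -> y != b -> e a y = e b y /\ e y a = e y b) ->
  e a b = e b a -> e a a = e b b -> is_automorphism e (tperm a b).
Proof.
move=> Ht Hab Haa x y.
case: tpermP => [->|->|/eqP Hxa /eqP Hxb]; case: tpermP => [->|->|/eqP Hya /eqP Hyb] //.
- by have [] := Ht y Hya Hyb.
- by have [] := Ht y Hya Hyb.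
- by have [] := Ht x Hxa Hxb.
- by have [] := Ht x Hxa Hxb.
Qed.

Section G2.
Variable n : nat.
Notation T := (VT n).
Definition va (i : 'I_n) : T := Some (i, (false, false)).
Definition vb (i : 'I_n) : T := Some (i, (false, true)).
Definition vc (i : 'I_n) : T := Some (i, (true, false)).
Definition vd (i : 'I_n) : T := Some (i, (true, true)).

Lemma aut_ab i : is_automorphism (@ge n) (tperm (va i) (vb i)).
Proof.
apply: tperm_aut => //.
move=> y Ha Hb.
suff H : ge (va i) y = ge (vb i) y by rewrite !(ge_sym y) H.
by case: y Ha Hb => [[j [[] []]]|].
Qed.

Lemma aut_cd i : is_automorphism (@ge n) (tperm (vc i) (vd i)).
Proof.
apply: tperm_aut => //.
move=> y Ha Hb.
suff H : ge (vc i) y = ge (vd i) y by rewrite !(ge_sym y) H.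
case: y Ha Hb => [[j [[] []]]|] //=.
  by case: (i =P j) => // ->; rewrite /vd eqxx.
by case: (i =P j) => // ->; rewrite /vc eqxx.
Qed.

Lemma fix_ac (p : {perm T}) : is_automorphism (@ge n) p ->
  (forall i, p (va i) = va i) -> (forall i, p (vc i) = vc i) -> p = 1%g.
Proof.
move=> Hp Ha Hc.
have HS : forall i s, p (Some (i, s)) = Some (i, s).
  move=> i [[] []].
  - have h1 := Hp (va i) (vd i); have h2 := Hp (vc i) (vd i).
    rewrite Ha in h1; rewrite Hc in h2.
    move: h1 h2; rewrite /= !eqxx /=; case E: (p (vd i)) => [[j [[] []]]|] //=; rewrite ?andbF ?andbT //.
    by case: (i =P j) => // ->.
  - exact: (Hc i).
  - have h1 := Hp (va i) (vb i); have h2 := Hp (vc i) (vb i).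
    rewrite Ha in h1; rewrite Hc in h2.
    move: h1 h2; rewrite /= !eqxx /=; case E: (p (vb i)) => [[j [[] []]]|] //=; rewrite ?andbF ?andbT //.
    + by move=> ->.
    + by move=> _ /eqP <-.
    + move=> _ /eqP Hij; subst j.
      have : p (vb i) = p (va i) by rewrite E Ha.
      by move/perm_inj; case.
  - exact: (Ha i).
apply/permP => x; rewrite perm1.
case: x => [[i s]|]; first exact: HS.
case E: (p None) => [[i s]|] //.
by move: E; rewrite -(HS i s) => /perm_inj.
Qed.

Lemma fix_edges (p : {perm T}) : is_automorphism (@ge n) p ->
  (forall i, p @: [set va i; vc i] = [set va i; vc i]) -> p = 1%g.
Proof.
move=> Hp H.
have Hm : forall i x, x \in [set va i; vc i] -> p x \in [set va i; vc i].
  by move=> i x Hx; rewrite -(H i); apply: imset_f.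
have Ka : forall i, p (va i) = va i.
  move=> i.
  have /set2P [//|Eac] := Hm i (va i) (set21 _ _).
  have /set2P [Eca|Ecc] := Hm i (vc i) (set22 _ _); last first.
    by rewrite -Eac in Ecc; move/perm_inj: Ecc.
  have Hd : p (vd i) = vd i.
    have h1 := Hp (va i) (vd i); have h2 := Hp (vc i) (vd i).
    rewrite Eac in h1; rewrite Eca in h2.
    move: h1 h2; rewrite /= !eqxx /=; case E: (p (vd i)) => [[j [[] []]]|] //=; rewrite ?andbF ?andbT //.
    by move=> /eqP ->.
  have h1 := Hp (va i) None; have h2 := Hp (vd i) None.
  rewrite Eac in h1; rewrite Hd in h2.
  move: h1 h2 => /=; case E: (p None) => [[j [[] []]]|] //=; rewrite ?andbF ?andbT //.
  - move=> /eqP Hij _; subst j.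
    have : p None = p (vd i) by rewrite E Hd.
    by move/perm_inj.
  - by move=> ->.
  - by move=> ->.
apply: fix_ac => // i.
have /set2P [Eca|//] := Hm i (vc i) (set22 _ _).
by rewrite -(Ka i) in Eca; move/perm_inj: Eca.
Qed.

Lemma det_num : is_determining_number (@ge n) (2 * n).
Proof.
split.
  pose h (x : 'I_n * bool) : T := Some (x.1, (x.2, false)).
  exists (h @: setT); split; last first.
    rewrite card_imset; last by move=> [i b] [j c] [-> ->].
    by rewrite cardsT card_prod card_ord card_bool mulnC.
  move=> p Hp Hfix; apply: fix_ac => // i.
    by apply: Hfix; apply/imsetP; exists (i, false).
  by apply: Hfix; apply/imsetP; exists (i, true).
move=> S HS.
case: (boolP [exists i, ((va i \notin S) && (vb i \notin S)) || ((vc i \notin S) && (vd i \notin S))]).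
  case/existsP => i /orP [/andP [Ha Hb] | /andP [Hc Hd]].
    have E : tperm (va i) (vb i) = 1%g.
      apply: HS => [|x Hx]; first exact: aut_ab.
      by apply: tpermD; apply/eqP => E; [move: Ha|move: Hb]; rewrite E Hx.
    by have := congr1 (fun q : {perm T} => q (va i)) E; rewrite tpermL perm1.
  have E : tperm (vc i) (vd i) = 1%g.
    apply: HS => [|x Hx]; first exact: aut_cd.
    by apply: tpermD; apply/eqP => E; [move: Hc|move: Hd]; rewrite E Hx.
  by have := congr1 (fun q : {perm T} => q (vc i)) E; rewrite tpermL perm1.
rewrite negb_exists => /forallP Hall.
pose g (x : 'I_n * bool) : T := Some (x.1, (x.2, Some (x.1, (x.2, false)) \notin S)).
have -> : 2 * n = #|g @: setT|.
  rewrite card_imset; last by move=> [i b] [j c] /= [-> -> _].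
  by rewrite cardsT card_prod card_ord card_bool mulnC.
apply: subset_leq_card; apply/subsetP => y /imsetP [[i b] _ ->].
have := Hall i; rewrite negb_or !negb_and !negbK => /andP [H1 H2].
rewrite /g /=; case: b; [case: (boolP (vc i \in S)) H2 | case: (boolP (va i \in S)) H1] => //=.
Qed.

Lemma det_idx : is_determining_index (@ge n) n.
Proof.
split.
  exists [set [set va i; vc i] | i : 'I_n]; split; last first.
    rewrite card_imset ?cardsT ?card_ord // => i j E.
    have : va i \in [set va j; vc j] by rewrite -E set21.
    by case/set2P => -[].
  split.
    apply/subsetP => E /imsetP [i _ ->]; apply/imsetP; exists (va i, vc i) => //.
    by rewrite inE /= eqxx.
  move=> p Hp Hfix; apply: fix_edges => // i.
  by apply: Hfix; apply/imsetP; exists i.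
move=> F [HF HS].
case: (boolP [exists i, [forall E in F, forall s, Some (i, s) \notin E]]).
  case/existsP => i /forall_inP Hi.
  have E : tperm (va i) (vb i) = 1%g.
    apply: HS => [|E HE]; first exact: aut_ab.
    rewrite -[RHS]imset_id; apply: eq_in_imset => x Hx.
    have /forallP Hs := Hi E HE.
    apply: tpermD; apply/eqP => Ex.
    - by have := Hs (false, false); rewrite -[Some _]/(va i) Ex Hx.
    - by have := Hs (false, true); rewrite -[Some _]/(vb i) Ex Hx.
  by have := congr1 (fun q : {perm T} => q (va i)) E; rewrite tpermL perm1.
rewrite negb_exists => /forallP Hall.
have Hex : forall i, exists E, (E \in F) && [exists s, Some (i, s) \in E].
  move=> i; have := Hall i; rewrite negb_forall_in => /existsP [E /andP [HE]].
  rewrite negb_forall => /existsP [s]; rewrite negbK => Hs.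
  by exists E; rewrite HE; apply/existsP; exists s.
pose g (i : 'I_n) : {set T} := odflt set0 [pick E | (E \in F) && [exists s, Some (i, s) \in E]].
have Hg : forall i, (g i \in F) && [exists s, Some (i, s) \in g i].
  move=> i; rewrite /g; case: pickP => //= H0.
  by have [E HE] := Hex i; move: (H0 E); rewrite HE.
have Hc : #|g @: setT| = n.
  rewrite card_imset ?cardsT ?card_ord //.
  move=> i j Eij.
  have /andP [Hi /existsP [s Hs]] := Hg i.
  have /andP [_ /existsP [t Ht]] := Hg j.
  rewrite -Eij in Ht.
  have /subsetP /(_ _ Hi) /imsetP [[x y] /=] := HF.
  rewrite inE /= => Hxy EE.
  rewrite EE in Hs Ht.
  case/set2P: Hs => Hs; case/set2P: Ht => Ht; subst.
  - by case: Ht.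
  - by move: Hxy => /= /andP [/eqP].
  - by move: Hxy => /= /andP [/eqP].
  - by case: Ht.
rewrite -[X in X <= _]Hc.
apply: subset_leq_card; apply/subsetP => y /imsetP [i _ ->].
by have /andP [] := Hg i.
Qed.
End G2.

Theorem theorem9 : forall n : nat, 0 < n ->
  exists (T : finType) (e : rel T),
    simple_graph e /\ connected_graph e /\
    is_determining_number e (2 * n) /\ is_determining_index e n.
Proof.
move=> n _; exists (option ('I_n * (bool * bool)))%type, (@ge n).
split; first by split; [exact: ge_sym | exact: ge_irr].
split; first exact: ge_conn.
split; [exact: det_num | exact: det_idx].
Qed.
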